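(* Consider an instance of \textbf{LTSP} in which there is $k\in\mathbb N$ such that $s(f)=k$ and $n(f)\le 1$ for every file $f\in\mathcal F$. Then $\mathcal B_1=\{(f,f): f\in\mathcal F\setminus\{f_1\},\ n(f)=1\}$ is optimal, i.e., $v(\mathcal B_1)\le v(\mathcal B_1')$ for every set $\mathcal B_1'$ of mini-batches not containing the leftmost file $f_1$.
   Context: A single-track tape stores a sequence of files $\mathcal F=(f_1,\dots,f_n)$ laid out contiguously from left to right: file $f$ occupies blocks $l(f),\dots,r(f)$, has size $s(f)=r(f)-l(f)+1$, $l(f_1)=1$, $l(f_{i+1})=r(f_i)+1$, and $m=\sum_f s(f)$. The tape moves one block per time step; at time $0$ the head is at position $m$. A file is read when the head traverses it rightwards from $l(f)$ to $r(f)$. $\mathcal R$ is a finite set of requests, all released at time $0$, each associated with a file $f(r)$; $\mathcal R(f)$ is the set of requests for $f$ and $n(f)=|\mathcal R(f)|$. A request's response time is the time at which the head starts a rightward reading traversal of its file (all pending requests of a file are serviced simultaneously). \textbf{LTSP} asks to minimize the sum of response times. A mini-batch is a pair $b=(f,f')$ of files with $l(f)\le l(f')$; $l(b)=l(f)$, $r(b)=r(f')$, $s(b)=r(b)-l(b)+1$, and $\mathcal F(b)$ is the set of files $g$ with $l(b)\le l(g)$ and $r(g)\le r(b)$; it is atomic if $|\mathcal F(b)|=1$. Given a set $\mathcal B_1$ of mini-batches, the associated schedule is: Phase 1, the head moves leftwards from $m$ to position $1$, and whenever it reaches $l(b)$ for some $b\in\mathcal B_1$ it executes $b$ (moves rightwards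 from $l(b)$ to $r(b)$, reading every file of $\mathcal F(b)$, then returns to $l(b)$) before continuing leftwards; Phase 2, the head moves rightwards from position $1$ to $m$, reading every file. $v(\mathcal B_1)$ denotes the total response time of this schedule. Convention of the paper: the leftmost file of the tape starts Phase 2 and never belongs to a mini-batch of Phase 1. *)

(* Defs.v *)
From mathcomp Require Import all_boot.
Set Implicit Arguments.
Unset Strict Implicit.
Unset Printing Implicit Defensive.

(* Files of a tape with [n] files are indexed by ['I_n] (left to right);
   [s : 'I_n -> nat] gives the file sizes (in blocks). *)

Definition lpos n (s : 'I_n -> nat) (i : 'I_n) : nat :=
  1 + \sum_(j < n | j < i) s j.
Definition rpos n (s : 'I_n -> nat) (i : 'I_n) : nat := lpos s i + s i - 1.
Definition tape_len n (s : 'I_n -> nat) : nat := \sum_(j < n) s j.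

Definition batch n := ('I_n * 'I_n)%type.
Definition is_minibatch n (s : 'I_n -> nat) (b : batch n) : bool :=
  lpos s b.1 <= lpos s b.2.
Definition lb n (s : 'I_n -> nat) (b : batch n) : nat := lpos s b.1.
Definition rb n (s : 'I_n -> nat) (b : batch n) : nat := rpos s b.2.
Definition in_batch n (s : 'I_n -> nat) (b : batch n) (g : 'I_n) : bool :=
  (lb s b <= lpos s g) && (rpos s g <= rb s b).

(* Order of execution in Phase 1: the head moves leftwards, so batches with a
   larger left end are executed first; batches with the same left end (a
   degenerate situation) are executed by increasing right end. *)
Definition batch_before n (s : 'I_n -> nat) (b' b : batch n) : bool :=
  (lb s b < lb s b') || ((lb s b' == lb s b) && (rb s b' < rb s b)).

(* executing b: move right from l(b) to r(b), then back to l(b) *)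
Definition detour n (s : 'I_n -> nat) (b : batch n) : nat := 2 * (rb s b - lb s b).

(* time at which the head reaches l(b) and starts executing b *)
Definition start_time n (s : 'I_n -> nat) (B : {set batch n}) (b : batch n) : nat :=
  (tape_len s - lb s b) + \sum_(b' in B | batch_before s b' b) detour s b'.

(* time at which Phase 1 ends (head at position 1) *)
Definition phase1_end n (s : 'I_n -> nat) (B : {set batch n}) : nat :=
  (tape_len s - 1) + \sum_(b in B) detour s b.

(* response time of file g: first time a rightward reading traversal of g
   starts (in some executed batch containing g, or in Phase 2). *)
Definition resp_time n (s : 'I_n -> nat) (B : {set batch n}) (g : 'I_n) : nat :=
  \big[minn/ phase1_end s B + (lpos s g - 1)]_(b in B | in_batch s b g)
     (start_time s B b + (lpos s g - lb s b)).

(* requests: a finite type R with f(r) given by fr *)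
Definition nreq n (R : finType) (fr : R -> 'I_n) (g : 'I_n) : nat :=
  #|[pred q | fr q == g]|.

Definition total_resp n (R : finType) (fr : R -> 'I_n) (s : 'I_n -> nat)
  (B : {set batch n}) : nat :=
  \sum_(q : R) resp_time s B (fr q).

(* B_1 = {(f,f) : f <> f_1, n(f) = 1}, with f_1 = ord0 *)
Definition atomic_B1 n (R : finType) (fr : R -> 'I_n.+1) : {set batch n.+1} :=
  [set b | (b.1 == b.2) && (b.1 != ord0) && (nreq fr b.1 == 1)].

(* Main.v *)
Require Import Defs.
From mathcomp Require Import all_boot zify.
Set Implicit Arguments. Unset Strict Implicit. Unset Printing Implicit Defensive.

Lemma sum_lt_const N x k : \sum_(j < N | j < x) k = minn N x * k.
Proof.
rewrite big_mkcond /=. elim: N => [|N IH]; first by rewrite big_ord0 min0n.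
rewrite big_ord_recr /= IH. case: ltnP => h.
- by rewrite (minn_idPl h) mulSn addnC.
- by rewrite (minn_idPr (leqW h)) addn0.
Qed.

Lemma sum_const_ord N k : \sum_(j < N) k = N * k.
Proof. by rewrite sum_nat_const card_ord. Qed.

Lemma count_int N a b : \sum_(h < N) ((a <= h) && (h < b) : nat) = minn N b - a.
Proof.
elim: N => [|N IH]; first by rewrite big_ord0 min0n.
rewrite big_ord_recr /= IH.
case: (leqP a N) => ha; case: (ltnP N b) => hb /=; lia.
Qed.

Lemma lposE n k (s : 'I_n.+1 -> nat) (hs : forall f, s f = k) i :
  lpos s i = 1 + i * k.
Proof.
rewrite /lpos (eq_bigr (fun _ => k)) // sum_lt_const.
by rewrite (minn_idPr (ltnW (ltn_ord i))).
Qed.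

Lemma rposE n k (s : 'I_n.+1 -> nat) (hs : forall f, s f = k) (hk : 0 < k) i :
  rpos s i = i * k + k.
Proof. rewrite /rpos (lposE hs) hs; lia. Qed.

Lemma tapeE n k (s : 'I_n.+1 -> nat) (hs : forall f, s f = k) :
  tape_len s = n.+1 * k.
Proof. by rewrite /tape_len (eq_bigr (fun _ => k)) // sum_const_ord. Qed.

Lemma in_batchE n k (s : 'I_n.+1 -> nat) (hs : forall f, s f = k) (hk : 0 < k) b h :
  in_batch s b h = (b.1 <= h <= b.2).
Proof.
by rewrite /in_batch /lb /rb !(lposE hs) !(rposE hs hk) leq_add2l leq_add2r !leq_pmul2r.
Qed.

Lemma bigmin_le (I : finType) (P : pred I) (F : I -> nat) x0 i :
  P i -> \big[minn/x0]_(j | P j) F j <= F i.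
Proof.
move=> Pi; rewrite unlock /=.
have : i \in index_enum I by rewrite mem_index_enum.
elim: (index_enum I) => // j r IH; rewrite inE => /orP [/eqP <-|ir] /=.
- by rewrite Pi geq_minl.
- by case: (P j) => /=; rewrite ?geq_min IH ?orbT.
Qed.

Lemma bigmin_le0 (I : finType) (P : pred I) (F : I -> nat) x0 :
  \big[minn/x0]_(j | P j) F j <= x0.
Proof. apply: (big_rec (fun x => x <= x0)) => // i x _ hx. by rewrite geq_min hx orbT. Qed.

Lemma bigmin_cases (I : finType) (P : pred I) (F : I -> nat) x0 c :
  \big[minn/x0]_(j | P j) F j <= c -> x0 <= c \/ exists2 i, P i & F i <= c.
Proof.
apply: (big_ind (fun x => x <= c -> _)) => //.
- by move=> h; left.
- move=> x y hx hy; rewrite geq_min => /orP [] //.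
- by move=> i Pi h; right; exists i.
Qed.

Lemma bigmin_ind (I : finType) (P : pred I) (F : I -> nat) x0 (K : nat -> Prop) :
  K x0 -> (forall i, P i -> K (F i)) -> K (\big[minn/x0]_(j | P j) F j).
Proof.
move=> h0 hF; apply: big_ind => // x y hx hy.
have [->|->] : minn x y = x \/ minn x y = y by rewrite /minn; case: ifP; auto.
- exact: hx.
- exact: hy.
Qed.

Lemma sum_mono_cond (I : finType) (P Q : pred I) (F : I -> nat) :
  (forall i, P i -> Q i) -> \sum_(i | P i) F i <= \sum_(i | Q i) F i.
Proof.
move=> PQ; rewrite [X in _ <= X]big_mkcond [X in X <= _]big_mkcond /=.
apply: leq_sum => i _; case: (boolP (P i)) => Pi; first by rewrite PQ.
by case: ifP.
Qed.

Definition pre n (s : 'I_n -> nat) (B : {set batch n}) b :=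
  \sum_(b' in B | batch_before s b' b) detour s b'.

Lemma before_trans n (s : 'I_n -> nat) x y z :
  batch_before s x y -> batch_before s y z -> batch_before s x z.
Proof. rewrite /batch_before; lia. Qed.

Lemma before_irr n (s : 'I_n -> nat) x : ~~ batch_before s x x.
Proof. rewrite /batch_before; lia. Qed.

Lemma pre_step n (s : 'I_n -> nat) (B : {set batch n}) b b' :
  b \in B -> batch_before s b b' -> pre s B b + detour s b <= pre s B b'.
Proof.
move=> bB hbb'; rewrite /pre [X in _ <= X](bigD1 b) /=; last by rewrite bB hbb'.
rewrite addnC leq_add2l; apply: sum_mono_cond => x /andP [xB hx].
rewrite xB (before_trans hx hbb') /=; apply/eqP => exb.
by move: hx; rewrite exb (negbTE (before_irr _ _)).
Qed.

Lemma pre_D n (s : 'I_n -> nat) (B : {set batch n}) b :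
  b \in B -> pre s B b + detour s b <= \sum_(x in B) detour s x.
Proof.
move=> bB; rewrite /pre [X in _ <= X](bigD1 b) //=.
rewrite addnC leq_add2l; apply: sum_mono_cond => x /andP [xB hx].
rewrite xB /=; apply/eqP => exb.
by move: hx; rewrite exb (negbTE (before_irr _ _)).
Qed.

Lemma files_detour n k (s : 'I_n.+1 -> nat) (hs : forall f, s f = k) (hk : 0 < k) (b : batch n.+1) :
  (k - 1) * (\sum_(h < n.+1) (in_batch s b h : nat)).*2 <= detour s b.
Proof.
rewrite (eq_bigr (fun h : 'I_n.+1 => ((b.1 <= h) && (h < b.2.+1) : nat))); last first.
  by move=> h _; rewrite (in_batchE hs hk) ltnS.
rewrite count_int /detour /rb /lb (lposE hs) (rposE hs hk).
have := geq_minr n.+1 b.2.+1; nia.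
Qed.

Lemma sum_mul2 (I : finType) (P : pred I) (F : I -> nat) c :
  c * (\sum_(i | P i) F i).*2 = \sum_(i | P i) c * (F i).*2.
Proof.
apply: (big_rec2 (fun y1 y2 => c * y1.*2 = y2)); first by rewrite muln0.
by move=> i y1 y2 _ <-; rewrite doubleD mulnDr.
Qed.

Lemma before_total n k (s : 'I_n.+1 -> nat) (hs : forall f, s f = k) (hk : 0 < k) (b b' : batch n.+1) :
  b != b' -> batch_before s b b' || batch_before s b' b.
Proof.
case: b b' => [x1 x2] [y1 y2] hne; apply/negPn/negP => H; apply: (negP hne).
move: H; rewrite /batch_before /lb /rb !(lposE hs) !(rposE hs hk) /= => H.
have /eqP : x1 * k = y1 * k by lia.
have /eqP : x2 * k = y2 * k by lia.
rewrite !eqn_pmul2r // => /eqP e2 /eqP e1.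
by rewrite xpair_eqE; apply/andP; split; apply/eqP; apply: val_inj.
Qed.

Lemma count_lt N b : \sum_(h < N) (h < b : nat) = minn N b.
Proof. by rewrite -(subn0 (minn N b)) -count_int. Qed.


Lemma LB n k (s : 'I_n.+1 -> nat) (hs : forall f, s f = k) (hk : 1 < k)
  (B : {set batch n.+1}) (g : 'I_n.+1) :
  (tape_len s - lpos s g) +
  (k - 1) * (\sum_(h < n.+1) ((h != g) && (resp_time s B h <= resp_time s B g) : nat)).*2
  <= resp_time s B g.
Proof.
have hk0 : 0 < k by apply: ltnW.
set r := resp_time s B.
pose K c := (tape_len s - lpos s g) +
  (k - 1) * (\sum_(h < n.+1) ((h != g) && (r h <= c) : nat)).*2 <= c.
suff : K (r g) by [].
rewrite {1}/r /resp_time; apply: (bigmin_ind (K:=K)).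
- rewrite /K.
  set c := phase1_end s B + (lpos s g - 1).
  have step : forall h : 'I_n.+1, ((h != g) && (r h <= c) : nat) <=
      ((0 <= h) && (h < g) : nat) + \sum_(b' in B) (in_batch s b' h : nat).
    move=> h; case: (boolP (h != g)) => //= hg.
    case: (boolP (r h <= c)) => //= hr.
    move: hr; rewrite /r /resp_time => /bigmin_cases [hd | [b' /andP [b'B hb'] _]].
    + have hhg : h <= g by move: hd; rewrite /c !(lposE hs); nia.
      have hg' : (h : nat) != g := hg.
      by have -> : h < g by rewrite ltn_neqAle hg' hhg.
    + by rewrite (bigD1 b') //= hb'; lia.
  have := @leq_sum _ (index_enum 'I_n.+1) xpredT _ _ (fun h _ => step h); rewrite big_split /= count_lt.
  rewrite exchange_big /= => hsum.
  have hD : (k - 1) * (\sum_(b' in B) \sum_(h < n.+1) (in_batch s b' h : nat)).*2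
      <= \sum_(b' in B) detour s b'.
    by rewrite sum_mul2; apply: leq_sum => b' _; apply: files_detour.
  have hg := ltn_ord g.
  have hgk : g * k + k <= n.+1 * k by nia.
  move: hsum hD; rewrite /c /phase1_end (tapeE hs) (lposE hs).
  set X := \sum_(b' in B) _; set Y := \sum_(b' in B) _; set Z := \sum_(i < n.+1) _.
  move=> hsum hD.
  have : (k - 1) * Z.*2 <= (k - 1) * (minn n.+1 g).*2 + (k - 1) * Y.*2.
    by rewrite -mulnDr leq_mul2l -doubleD leq_double hsum orbT.
  have : (k - 1) * (minn n.+1 g).*2 <= (g * k).*2.
    by rewrite -!muln2 mulnA leq_mul2r; nia.
  lia.
- move=> [b1 b2] /andP [bB hgb]; rewrite /K /start_time -/(pre s B (b1, b2)).
  set c := _ + (lpos s g - lb s (b1, b2)).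
  move: (hgb); rewrite (in_batchE hs hk0) => /andP [hb1 hb2].
  have hg := ltn_ord g.
  have hgk : g * k + k <= n.+1 * k by nia.
  have hb1k : b1 * k <= g * k by rewrite leq_mul2r hb1 orbT.
  have hb2k : g * k <= b2 * k by rewrite leq_mul2r hb2 orbT.
  have hpD := pre_D s bB.
  have step : forall h : 'I_n.+1, ((h != g) && (r h <= c) : nat) <=
      ((b1 <= h) && (h < g) : nat) + \sum_(b' in B | batch_before s b' (b1, b2)) (in_batch s b' h : nat).
    move=> h; case: (boolP (h != g)) => //= hg0.
    case: (boolP (r h <= c)) => //= hr.
    move: hr; rewrite /r /resp_time => /bigmin_cases [hd | [[b1' b2'] /andP [b'B hb'] hc]].
    + exfalso; move: hd hpD; rewrite /c /phase1_end.
      move: (\sum_(x in B) detour s x) => D.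
      rewrite /detour /lb /rb /= (tapeE hs) !(lposE hs) !(rposE hs hk0).
      lia.
    + case: (eqVneq (b1', b2') (b1, b2)) => [eb | nb].
      * case: eb => e1 e2; subst b1' b2'; move: hc; rewrite /c /start_time -/(pre s B (b1, b2)).
        rewrite /lb /= !(lposE hs) => hc.
        have hhg : h <= g.
          move: (hb'); rewrite (in_batchE hs hk0) /= => /andP [hh1 _].
          have hh1k : b1 * k <= h * k by rewrite leq_mul2r hh1 orbT.
          have : h * k <= g * k by lia.
          by rewrite leq_pmul2r.
        move: hb'; rewrite (in_batchE hs hk0) /= => /andP [hh1 _].
        have hg' : (h : nat) != g := hg0.
        have -> : h < g by rewrite ltn_neqAle hg' hhg.
        by rewrite hh1.
      * case/orP: (before_total hs hk0 nb) => hbb.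
        - by rewrite (bigD1 (b1', b2')) /= ?b'B ?hbb ?hb' //; lia.
        - exfalso; have hps := pre_step bB hbb.
          move: hb'; rewrite (in_batchE hs hk0) /= => /andP [hh1 hh2].
          have hh1k : b1' * k <= h * k by rewrite leq_mul2r hh1 orbT.
          have hhk : h * k + k <= n.+1 * k by have := ltn_ord h; nia.
          have hlb : lb s (b1', b2') <= lb s (b1, b2).
            by move: hbb; rewrite /batch_before /lb /rb /= ; lia.
          move: hc hlb hps; rewrite /c /start_time -/(pre s B (b1', b2')) /detour /lb /rb /= (tapeE hs) !(lposE hs) !(rposE hs hk0).
          lia.
  have := @leq_sum _ (index_enum 'I_n.+1) xpredT _ _ (fun h _ => step h); rewrite big_split /= count_int.
  rewrite exchange_big /= => hsum.
  have hD : (k - 1) * (\sum_(b' in B | batch_before s b' (b1, b2)) \sum_(h < n.+1) (in_batch s b' h : nat)).*2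
      <= pre s B (b1, b2).
    by rewrite sum_mul2; apply: leq_sum => b' _; apply: files_detour.
  move: hsum hD; rewrite /c /lb /= (tapeE hs) !(lposE hs).
  move: (pre s B (b1, b2)) => P.
  set Y := \sum_(b' in B | _) _; set Z := \sum_(i < n.+1) _.
  move=> hsum hD.
  have : (k - 1) * Z.*2 <= (k - 1) * (minn n.+1 g - b1).*2 + (k - 1) * Y.*2.
    by rewrite -mulnDr leq_mul2l -doubleD leq_double hsum orbT.
  have : (k - 1) * (minn n.+1 g - b1).*2 <= (g * k - b1 * k).*2.
    rewrite (minn_idPr (ltnW hg)) -!muln2 mulnA leq_mul2r /= mulnBl. nia.
  lia.
Qed.


Lemma TR n (R : finType) (fr : R -> 'I_n) (s : 'I_n -> nat) (B : {set batch n}) :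
  total_resp fr s B = \sum_g nreq fr g * resp_time s B g.
Proof.
rewrite /total_resp (partition_big fr xpredT) //=.
apply: eq_bigr => g _.
rewrite (eq_bigr (fun _ => resp_time s B g)); last by move=> q /eqP ->.
by rewrite (eq_bigl (fun q => q \in [pred q | fr q == g])) // sum_nat_const.
Qed.

Lemma sumA n (R : finType) (fr : R -> 'I_n.+1) (P : pred (batch n.+1)) (F : batch n.+1 -> nat) :
  \sum_(b | (b \in atomic_B1 fr) && P b) F b =
  \sum_(x < n.+1 | (x != ord0) && (nreq fr x == 1) && P (x, x)) F (x, x).
Proof.
rewrite big_mkcond /=.
pose G := fun x y => if ((x, y) \in atomic_B1 fr) && P (x, y) then F (x, y) else 0.
rewrite (eq_bigr (fun p => G p.1 p.2)); last by case.
have -> : \sum_(p : batch n.+1) G p.1 p.2 = \sum_(p : 'I_n.+1 * 'I_n.+1) G p.1 p.2 by [].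
rewrite -pair_bigA /= [RHS]big_mkcond /=; apply: eq_bigr => x _.
rewrite /G.
rewrite (bigD1 x) //= big1 ?addn0.
- by rewrite inE /= eqxx.
- by move=> y hy; rewrite inE /= eq_sym (negbTE hy).
Qed.

Lemma sumA_detour n k (s : 'I_n.+1 -> nat) (hs : forall f, s f = k) (hk : 0 < k)
  (R : finType) (fr : R -> 'I_n.+1) (Q Q' : pred 'I_n.+1) :
  (forall x, x != ord0 -> Q x -> Q' x) ->
  \sum_(x < n.+1 | (x != ord0) && (nreq fr x == 1) && Q x) detour s (x, x)
  <= (k - 1) * (\sum_(h < n.+1) (Q' h : nat) * nreq fr h).*2.
Proof.
move=> QQ; rewrite sum_mul2 big_mkcond /=; apply: leq_sum => x _.
case: ifP => // /andP [/andP [x0 /eqP ->] Qx].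
rewrite QQ // /detour /lb /rb /= (lposE hs) (rposE hs hk); lia.
Qed.

Lemma UB n k (s : 'I_n.+1 -> nat) (hs : forall f, s f = k) (hk : 0 < k)
  (R : finType) (fr : R -> 'I_n.+1) (g : 'I_n.+1) :
  (g == ord0) || (nreq fr g == 1) ->
  resp_time s (atomic_B1 fr) g <=
  (tape_len s - lpos s g) + (k - 1) * (\sum_(h < n.+1) ((g < h) : nat) * nreq fr h).*2.
Proof.
move=> hg; case: (eqVneq g ord0) => [eg | g0].
- rewrite eg; apply: leq_trans (bigmin_le0 _ _ _) _.
  rewrite /phase1_end (lposE hs) /= mul0n addn0 subnn addn0 leq_add2l.
  rewrite (eq_bigl (fun b => (b \in atomic_B1 fr) && true)) => [|b]; last by rewrite andbT.
  rewrite sumA; apply: (sumA_detour hs hk) => // x x0 _.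
  move: x0; apply: contraNT; rewrite -leqNgt leqn0 => /eqP e; apply/eqP.
  by apply: ord_inj.
- have hgA : (g, g) \in atomic_B1 fr.
    by move: hg; rewrite (negbTE g0) inE /= eqxx g0.
  have hin : ((g, g) \in atomic_B1 fr) && in_batch s (g, g) g.
    by rewrite hgA (in_batchE hs hk) /= leqnn.
  rewrite /resp_time; apply: leq_trans (@bigmin_le _ (fun b => (b \in atomic_B1 fr) && in_batch s b g) (fun b => start_time s (atomic_B1 fr) b + (lpos s g - lb s b)) (phase1_end s (atomic_B1 fr) + (lpos s g - 1)) (g, g) hin) _.
  rewrite /start_time /lb /= subnn addn0 leq_add2l.
  rewrite sumA; apply: (sumA_detour hs hk) => x _ hb.
  move: hb; rewrite /batch_before /lb /rb /= !(lposE hs) !(rposE hs hk) => hb.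
  have : g * k < x * k by lia.
  by rewrite ltn_pmul2r.
Qed.

Lemma LB1 n k (s : 'I_n.+1 -> nat) (hs : forall f, s f = k) (B : {set batch n.+1}) g :
  tape_len s - lpos s g <= resp_time s B g.
Proof.
rewrite /resp_time; apply: (bigmin_ind (K := fun c => tape_len s - lpos s g <= c)).
- rewrite /phase1_end (lposE hs); lia.
- move=> b /andP [_ /andP [h1 _]]; rewrite /start_time; lia.
Qed.

Lemma LBw n k (s : 'I_n.+1 -> nat) (hs : forall f, s f = k) (hk : 0 < k)
  (R : finType) (fr : R -> 'I_n.+1) (hw : forall f, nreq fr f <= 1)
  (B : {set batch n.+1}) (g : 'I_n.+1) :
  (tape_len s - lpos s g) +
  (k - 1) * (\sum_(h < n.+1) ((h != g) && (resp_time s B h <= resp_time s B g) : nat) * nreq fr h).*2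
  <= resp_time s B g.
Proof.
case hk1 : (1 < k).
- apply: leq_trans (LB hs hk1 B g); rewrite leq_add2l leq_mul2l leq_double.
  apply/orP; right; apply: leq_sum => h _.
  by case: (_ && _); rewrite ?mul0n ?mul1n.
- have -> : k - 1 = 0 by move: hk1; lia.
  by rewrite mul0n addn0; apply: LB1 hs B g.
Qed.

Theorem theorem2 (n k : nat) (s : 'I_n.+1 -> nat) (R : finType)
  (fr : R -> 'I_n.+1) :
  0 < k ->
  (forall f, s f = k) ->
  (forall f, nreq fr f <= 1) ->
  forall B' : {set batch n.+1},
    (forall b, b \in B' -> is_minibatch s b) ->
    (forall b, b \in B' -> ~~ in_batch s b ord0) ->
    total_resp fr s (atomic_B1 fr) <= total_resp fr s B'.
Proof.
move=> hk hs hw B' _ _.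
rewrite !TR.
set w := nreq fr.
set r := resp_time s B'.
set m := tape_len s.
have H1 : \sum_(g : 'I_n.+1) w g * resp_time s (atomic_B1 fr) g <=
    \sum_(g : 'I_n.+1) w g * ((m - lpos s g) + (k - 1) * (\sum_(h : 'I_n.+1) ((g < h) : nat) * w h).*2).
  apply: leq_sum => g _; have := hw g; rewrite -/w.
  case e: (w g) => [|[|]] // _; rewrite ?mul0n // !mul1n.
  by apply: (UB hs hk); rewrite orbC -/w e.
have H2 : \sum_(g : 'I_n.+1) w g * ((m - lpos s g) + (k - 1) * (\sum_(h : 'I_n.+1) ((h != g) && (r h <= r g) : nat) * w h).*2)
    <= \sum_(g : 'I_n.+1) w g * r g.
  apply: leq_sum => g _; rewrite leq_mul2l; apply/orP; right; exact: (LBw hs hk hw).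
apply: (leq_trans H1); apply: (leq_trans _ H2).
have E : forall (Y : 'I_n.+1 -> nat),
    \sum_(g : 'I_n.+1) w g * ((m - lpos s g) + (k - 1) * (Y g).*2) =
    \sum_(g : 'I_n.+1) w g * (m - lpos s g) + (k - 1) * (\sum_(g : 'I_n.+1) w g * Y g).*2.
  move=> Y; rewrite sum_mul2 -big_split /=; apply: eq_bigr => g _; rewrite -!muln2; lia.
rewrite !E leq_add2l leq_mul2l leq_double; apply/orP; right.
have D1 : forall (C : 'I_n.+1 -> 'I_n.+1 -> bool),
    \sum_(g : 'I_n.+1) w g * \sum_(h : 'I_n.+1) (C g h : nat) * w h = \sum_(g : 'I_n.+1) \sum_(h : 'I_n.+1) (C g h : nat) * (w g * w h).
  move=> C; apply: eq_bigr => g _; rewrite big_distrr /=; apply: eq_bigr => h _; lia.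
rewrite !D1.
have sym : forall F : 'I_n.+1 -> 'I_n.+1 -> nat,
    \sum_(g : 'I_n.+1) \sum_(h : 'I_n.+1) F g h + \sum_(g : 'I_n.+1) \sum_(h : 'I_n.+1) F g h = \sum_(g : 'I_n.+1) \sum_(h : 'I_n.+1) (F g h + F h g).
  move=> F; rewrite [X in _ + X]exchange_big -big_split /=; apply: eq_bigr => g _.
  by rewrite -big_split.
rewrite -leq_double -!addnn !sym; apply: leq_sum => g _; apply: leq_sum => h _.
rewrite [w h * w g]mulnC.
case: (ltngtP g h) => [gh|hg|e] /=.
- have -> : (h != g) = true by apply/negP => /eqP e; move: gh; rewrite e ltnn.
  have -> : (g != h) = true by apply/negP => /eqP e; move: gh; rewrite e ltnn.
  case: (leqP (r h) (r g)) => /= hr; last rewrite (ltnW hr); lia.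
- have -> : (h != g) = true by apply/negP => /eqP e; move: hg; rewrite e ltnn.
  have -> : (g != h) = true by apply/negP => /eqP e; move: hg; rewrite e ltnn.
  case: (leqP (r h) (r g)) => /= hr; last rewrite (ltnW hr); lia.
- lia.
Qed.
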